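(* Let $(X,\mathcal R)$ and $(Y,\mathcal S)$ be exactly triply regular symmetric $d$-class association schemes having the same Delta–Wye parameters with respect to orderings $A_0,\dots,A_d$, $A'_0,\dots,A'_d$ of their adjacency matrices and $E_0,\dots,E_d$, $E'_0,\dots,E'_d$ of their primitive idempotents. Then, under these orderings, the two schemes have the same intersection numbers $p_{ij}^k$, the same eigenvalues $P_{ji}$, the same dual eigenvalues $Q_{ji}$ and the same Krein parameters $q_{ij}^k$. Moreover the linear map $\kappa:\mathbb A\to\mathbb A'$ defined by $\kappa(A_i)=A'_i$ ($0\le i\le d$) satisfies $\kappa(MN)=\kappa(M)\kappa(N)$ and $\kappa(M\circ N)=\kappa(M)\circ\kappa(N)$ for all $M,N\in\mathbb A$, and $\kappa(E_j)=E'_j$ for all $j$.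
   Context: A symmetric $d$-class association scheme $(X,\mathcal R)$ consists of a finite nonempty set $X$ and a partition $\mathcal R=\{R_0,\dots,R_d\}$ of $X\times X$ into nonempty symmetric relations, with $R_0=\{(x,x):x\in X\}$, such that for all $i,j,k$ the number $p_{ij}^k=|\{z\in X:(x,z)\in R_i,(z,y)\in R_j\}|$ (the intersection numbers) does not depend on the choice of $(x,y)\in R_k$. The adjacency matrix $A_i\in\mathrm{Mat}_X(\mathbb C)$ is the $0/1$ matrix of $R_i$. The Bose–Mesner algebra $\mathbb A=\mathrm{span}\{A_0,\dots,A_d\}$ is commutative and closed under ordinary matrix product and under the entrywise (Schur) product $\circ$; it has a second basis of primitive idempotents $E_0,\dots,E_d$ (symmetric, $E_iE_j=\delta_{ij}E_i$, $\sum_j E_j=I$). Eigenvalues $P_{ji}$ and dual eigenvalues $Q_{ji}$ are defined by $A_i=\sum_j P_{ji}E_j$ and $E_i=|X|^{-1}\sum_j Q_{ji}A_j$, and Krein parameters $q_{ij}^k$ by $E_i\circ E_j=|X|^{-1}\sum_k q_{ij}^kE_k$. $\mathbb A'$ denotes the Bose–Mesner algebra of $(Y,\mathcal S)$. For $L,M,N\in\mathrm{Mat}_X(\mathbb C)$ define tensors in $(\mathbb C^X)^{\otimes 3}$: $\Delta(L,M,N)=\sum_{x,y,z\in X}L_{xz}M_{xy}N_{yz}\,\hat x\otimes\hat y\otimes\hat z$ and $\Upsilon(L,M,N)=\sum_{x,y,z,u\in X}L_{xu}M_{yu}N_{zu}\,\hat x\otimes\hat y\otimes\hat z$. Let $\Delta(\mathbb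 A)$ and $\Upsilon(\mathbb A)$ be the spans of all $\Delta(L,M,N)$, resp. $\Upsilon(L,M,N)$, with $L,M,N\in\mathbb A$. The scheme is triply regular if $\Upsilon(\mathbb A)\subseteq\Delta(\mathbb A)$, dually triply regular if $\Delta(\mathbb A)\subseteq\Upsilon(\mathbb A)$, and exactly triply regular if both hold. It is known that the tensors $\Upsilon(E_r,E_s,E_t)$ with $q_{rs}^t>0$ form a basis of $\Upsilon(\mathbb A)$. Delta–Wye parameters: if the scheme is exactly triply regular, then for each $i,j,k\in\{0,\dots,d\}$ there are unique scalars $\sigma^{i,j,k}_{r,s,t}$ ($r,s,t$ with $q_{rs}^t>0$; set $\sigma^{i,j,k}_{r,s,t}=0$ when $q_{rs}^t=0$) such that $\Delta(A_i,A_j,A_k)=\sum_{q_{rs}^t>0}\sigma^{i,j,k}_{r,s,t}\,\Upsilon(E_r,E_s,E_t)$. Two exactly triply regular $d$-class schemes $(X,\mathcal R)$, $(Y,\mathcal S)$ have the same Delta–Wye parameters if there are orderings $A_0,\dots,A_d$ and $A'_0,\dots,A'_d$ of their adjacency matrices and $E_0,\dots,E_d$ and $E'_0,\dots,E'_d$ of their primitive idempotents such that $\sigma^{i,j,k}_{r,s,t}$ computed in $(X,\mathcal R)$ equals the corresponding $\sigma^{i,j,k}_{r,s,t}$ computed in $(Y,\mathcal S)$ for all $i,j,k,r,s,t\in\{0,\dots,d\}$. *)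

(* Defs.v *)
From mathcomp Require Import all_boot all_order all_algebra all_field.
Set Implicit Arguments. Unset Strict Implicit. Unset Printing Implicit Defensive.
Import GRing.Theory Num.Theory.
Local Open Scope ring_scope.

(* A scheme on the finite set X = 'I_n with classes indexed by 'I_d.+1 is given
   by its "class function" R : X -> X -> 'I_d.+1, (x,y) \in R_i <-> R x y = i.
   The labelling of the classes is the chosen ordering A_0,...,A_d. *)

Definition adj n d (R : 'I_n -> 'I_n -> 'I_d.+1) (i : 'I_d.+1) : 'M[algC]_n :=
  \matrix_(x, y) (R x y == i)%:R.

Definition schur n (M N : 'M[algC]_n) : 'M[algC]_n := \matrix_(x, y) (M x y * N x y).

(* symmetric d-class association scheme (the diagonal relation is one of the
   classes; which label it carries is part of the chosen ordering) *)
Definition is_symm_scheme n d (R : 'I_n -> 'I_n -> 'I_d.+1) : Prop :=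
  [/\ exists i0 : 'I_d.+1, forall x y, (R x y == i0) = (x == y),
      forall x y, R x y = R y x,
      forall i : 'I_d.+1, exists x y, R x y = i &
      forall (i j k : 'I_d.+1) (x y x' y' : 'I_n), R x y = k -> R x' y' = k ->
        #|[set z | (R x z == i) && (R z y == j)]| =
        #|[set z | (R x' z == i) && (R z y' == j)]| ].

Definition inBM n d (R : 'I_n -> 'I_n -> 'I_d.+1) (M : 'M[algC]_n) : Prop :=
  exists c : 'I_d.+1 -> algC, M = \sum_i c i *: adj R i.

Definition prim_idem_ordering n d (R : 'I_n -> 'I_n -> 'I_d.+1)
    (E : 'I_d.+1 -> 'M[algC]_n) : Prop :=
  [/\ forall j, inBM R (E j),
      forall j, (E j)^T = E j,
      forall i j, E i *m E j = (if i == j then E i else 0),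
      \sum_j E j = 1%:M &
      forall j, E j != 0 /\
        (forall F, inBM R F -> F *m F = F -> F *m E j = F -> F = 0 \/ F = E j)].

Definition is_intersection_numbers n d (R : 'I_n -> 'I_n -> 'I_d.+1)
    (p : 'I_d.+1 -> 'I_d.+1 -> 'I_d.+1 -> nat) : Prop :=
  forall (i j k : 'I_d.+1) (x y : 'I_n), R x y = k ->
    #|[set z | (R x z == i) && (R z y == j)]| = p i j k.

Definition is_eigenmatrix n d (R : 'I_n -> 'I_n -> 'I_d.+1)
    (E : 'I_d.+1 -> 'M[algC]_n) (P : 'I_d.+1 -> 'I_d.+1 -> algC) : Prop :=
  forall i, adj R i = \sum_j P j i *: E j.

Definition is_dual_eigenmatrix n d (R : 'I_n -> 'I_n -> 'I_d.+1)
    (E : 'I_d.+1 -> 'M[algC]_n) (Q : 'I_d.+1 -> 'I_d.+1 -> algC) : Prop :=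
  forall i, E i = (n%:R)^-1 *: \sum_j Q j i *: adj R j.

Definition is_krein n d (E : 'I_d.+1 -> 'M[algC]_n)
    (q : 'I_d.+1 -> 'I_d.+1 -> 'I_d.+1 -> algC) : Prop :=
  forall i j, schur (E i) (E j) = (n%:R)^-1 *: \sum_k q i j k *: E k.

Definition tensor n := 'I_n -> 'I_n -> 'I_n -> algC.

Definition Delta n (L M N : 'M[algC]_n) : tensor n :=
  fun x y z => L x z * M x y * N y z.

Definition Upsilon n (L M N : 'M[algC]_n) : tensor n :=
  fun x y z => \sum_u L x u * M y u * N z u.

Definition in_Delta_span n d (R : 'I_n -> 'I_n -> 'I_d.+1) (T : tensor n) : Prop :=
  exists s : seq ('M[algC]_n * 'M[algC]_n * 'M[algC]_n * algC),
    (forall t, t \in s -> [/\ inBM R t.1.1.1, inBM R t.1.1.2 & inBM R t.1.2]) /\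
    forall x y z, T x y z = \sum_(t <- s) t.2 * Delta t.1.1.1 t.1.1.2 t.1.2 x y z.

Definition in_Upsilon_span n d (R : 'I_n -> 'I_n -> 'I_d.+1) (T : tensor n) : Prop :=
  exists s : seq ('M[algC]_n * 'M[algC]_n * 'M[algC]_n * algC),
    (forall t, t \in s -> [/\ inBM R t.1.1.1, inBM R t.1.1.2 & inBM R t.1.2]) /\
    forall x y z, T x y z = \sum_(t <- s) t.2 * Upsilon t.1.1.1 t.1.1.2 t.1.2 x y z.

Definition triply_regular n d (R : 'I_n -> 'I_n -> 'I_d.+1) : Prop :=
  forall L M N, inBM R L -> inBM R M -> inBM R N -> in_Delta_span R (Upsilon L M N).

Definition dually_triply_regular n d (R : 'I_n -> 'I_n -> 'I_d.+1) : Prop :=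
  forall L M N, inBM R L -> inBM R M -> inBM R N -> in_Upsilon_span R (Delta L M N).

Definition exactly_triply_regular n d (R : 'I_n -> 'I_n -> 'I_d.+1) : Prop :=
  triply_regular R /\ dually_triply_regular R.

(* sigma is the array of Delta-Wye parameters sigma^{i,j,k}_{r,s,t} of the scheme
   (w.r.t. the orderings given by R and E): sigma vanishes where q_{rs}^t = 0 and
   Delta(A_i,A_j,A_k) = sum_{r,s,t} sigma^{ijk}_{rst} Upsilon(E_r,E_s,E_t).
   (These are unique since the Upsilon(E_r,E_s,E_t) with q_{rs}^t>0 form a basis.) *)
Definition is_DeltaWye n d (R : 'I_n -> 'I_n -> 'I_d.+1) (E : 'I_d.+1 -> 'M[algC]_n)
    (sigma : 'I_d.+1 -> 'I_d.+1 -> 'I_d.+1 -> 'I_d.+1 -> 'I_d.+1 -> 'I_d.+1 -> algC)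
    : Prop :=
  (exists q, is_krein E q /\
     forall i j k r s t, q r s t = 0 -> sigma i j k r s t = 0) /\
  forall i j k x y z,
    Delta (adj R i) (adj R j) (adj R k) x y z =
    \sum_r \sum_s \sum_t sigma i j k r s t * Upsilon (E r) (E s) (E t) x y z.

(* Main.v *)
Require Import Defs.
From mathcomp Require Import all_boot all_order all_algebra all_field.
Set Implicit Arguments. Unset Strict Implicit. Unset Printing Implicit Defensive.
Import GRing.Theory Num.Theory.
Local Open Scope ring_scope.

Section Scheme.
Variables (n d : nat) (R : 'I_n -> 'I_n -> 'I_d.+1) (E : 'I_d.+1 -> 'M[algC]_n).
Hypothesis HR : is_symm_scheme R.
Hypothesis HE : prim_idem_ordering R E.

Definition wit (i : 'I_d.+1) := [pick xy : 'I_n * 'I_n | R xy.1 xy.2 == i].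
Definition coef (M : 'M[algC]_n) i :=
  if wit i is Some xy then M xy.1 xy.2 else 0.
Definition pnum (i j k : 'I_d.+1) : nat :=
  if wit k is Some xy then #|[set z | (R xy.1 z == i) && (R z xy.2 == j)]| else 0.

Lemma sum_adjE (c : 'I_d.+1 -> algC) x y :
  (\sum_k c k *: adj R k) x y = c (R x y).
Proof.
rewrite summxE (bigD1 (R x y)) //= big1 ?addr0; first by rewrite !mxE eqxx mulr1.
by move=> k /negbTE nk; rewrite !mxE eq_sym nk mulr0.
Qed.

Lemma wit_spec i : exists xy, wit i = Some xy /\ R xy.1 xy.2 = i.
Proof.
rewrite /wit; case: pickP => [xy /eqP H | H]; first by exists xy.
case: HR => _ _ Hs _; have [x [y Hxy]] := Hs i.
by have := H (x, y); rewrite /= Hxy eqxx.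
Qed.

Lemma coef_sum c i : coef (\sum_k c k *: adj R k) i = c i.
Proof.
by rewrite /coef; have [xy [-> Hxy]] := wit_spec i; rewrite sum_adjE Hxy.
Qed.

Lemma inBM_coef M : inBM R M -> M = \sum_i coef M i *: adj R i.
Proof.
move=> [c ->]; apply: eq_bigr => i _; by rewrite coef_sum.
Qed.

Lemma pnumE x y i j :
  #|[set z | (R x z == i) && (R z y == j)]| = pnum i j (R x y).
Proof.
rewrite /pnum; have [xy [-> Hxy]] := wit_spec (R x y).
case: HR => _ _ _ Hreg; exact: Hreg.
Qed.

Lemma card_natr (b : 'I_n -> bool) :
  \sum_z (b z)%:R = (#|[set z | b z]|%:R : algC).
Proof.
rewrite -sum1_card natr_sum [RHS]big_mkcond /=; apply: eq_bigr => z _.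
by rewrite inE; case: (b z).
Qed.

Lemma adj_mul i j :
  adj R i *m adj R j = \sum_k (pnum i j k)%:R *: adj R k.
Proof.
apply/matrixP => x y; rewrite sum_adjE mxE -pnumE -card_natr.
by apply: eq_bigr => z _; rewrite !mxE; case: (R x z == i); case: (R z y == j);
  rewrite ?mulr1 ?mulr0.
Qed.

Lemma mul_sum (a b : 'I_d.+1 -> algC) :
  (\sum_i a i *: adj R i) *m (\sum_j b j *: adj R j) =
  \sum_k (\sum_i \sum_j a i * b j * (pnum i j k)%:R) *: adj R k.
Proof.
rewrite mulmx_suml.
under eq_bigr => i _ do rewrite mulmx_sumr.
under eq_bigr => i _ do under eq_bigr => j _ do
  rewrite -scalemxAl -scalemxAr scalerA adj_mul scaler_sumr.
under [RHS]eq_bigr => k _ do rewrite scaler_suml.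
under [RHS]eq_bigr => k _ do under eq_bigr => i _ do rewrite scaler_suml.
under eq_bigr => i _ do rewrite exchange_big /=.
rewrite exchange_big /=; apply: eq_bigr => k _; apply: eq_bigr => i _.
by apply: eq_bigr => j _; rewrite scalerA.
Qed.

Lemma schur_sum (a b : 'I_d.+1 -> algC) :
  schur (\sum_i a i *: adj R i) (\sum_j b j *: adj R j) =
  \sum_k (a k * b k) *: adj R k.
Proof. by apply/matrixP => x y; rewrite mxE !sum_adjE. Qed.


Lemma E_coef j : E j = \sum_i coef (E j) i *: adj R i.
Proof. by case: HE => H _ _ _ _; apply: inBM_coef. Qed.

Lemma E_orth i j : E i *m E j = if i == j then E i else 0.
Proof. by case: HE => _ _ H _ _; apply: H. Qed.

Lemma E_nz j : E j != 0.
Proof. by case: HE => _ _ _ _ H; case: (H j). Qed.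

Lemma Esum_mul (c : 'I_d.+1 -> algC) s : (\sum_r c r *: E r) *m E s = c s *: E s.
Proof.
rewrite mulmx_suml (bigD1 s) //= big1 ?addr0.
  by rewrite -scalemxAl E_orth eqxx.
by move=> r /negbTE nr; rewrite -scalemxAl E_orth nr scaler0.
Qed.

Lemma mul_Esum (c : 'I_d.+1 -> algC) s : E s *m (\sum_r c r *: E r) = c s *: E s.
Proof.
rewrite mulmx_sumr (bigD1 s) //= big1 ?addr0.
  by rewrite -scalemxAr E_orth eqxx.
by move=> r /negbTE nr; rewrite -scalemxAr E_orth eq_sym nr scaler0.
Qed.

Lemma scale_E_inj a b s : a *: E s = b *: E s -> a = b.
Proof.
move/eqP; rewrite -subr_eq0 -scalerBl scaler_eq0 (negbTE (E_nz s)) orbF subr_eq0.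
by move/eqP.
Qed.

Lemma E_indep c c' : \sum_r c r *: E r = \sum_r c' r *: E r -> forall r, c r = c' r.
Proof.
move=> H r; apply: (@scale_E_inj _ _ r).
by rewrite -Esum_mul H Esum_mul.
Qed.

Definition Cmat : 'M[algC]_d.+1 := \matrix_(s, l) coef (E s) l.

Lemma combA (u : 'I_d.+1 -> algC) :
  \sum_s u s *: E s = \sum_l (\sum_s u s * Cmat s l) *: adj R l.
Proof.
under eq_bigr => s _ do rewrite E_coef scaler_sumr.
rewrite exchange_big /=; apply: eq_bigr => l _.
rewrite scaler_suml; apply: eq_bigr => s _.
by rewrite scalerA mxE.
Qed.

Lemma adj_indep c c' : \sum_l c l *: adj R l = \sum_l c' l *: adj R l ->
  forall l, c l = c' l.
Proof. by move=> H l; rewrite -(coef_sum c) H coef_sum. Qed.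

Lemma Cmat_unit : Cmat \in unitmx.
Proof.
rewrite unitmxE unitfE; apply/negP => /det0P [v vnz vC0].
move/eqP: vnz; apply; apply/matrixP => i s; rewrite (ord1 i) mxE.
have H : \sum_s v 0 s *: E s = \sum_s 0 *: E s.
  rewrite !combA; apply: eq_bigr => l _.
  have -> : \sum_s 0 * Cmat s l = 0 by rewrite big1 // => s0 _; rewrite mul0r.
  by have := congr1 (fun M : 'rV[algC]_d.+1 => M 0 l) vC0; rewrite !mxE => ->.
exact: (E_indep H).
Qed.

Definition Pm := invmx Cmat.

Lemma eigen i : adj R i = \sum_s Pm i s *: E s.
Proof.
rewrite combA.
have H : Pm *m Cmat = 1%:M by apply: mulVmx; apply: Cmat_unit.
rewrite (bigD1 i) //= [X in _ + X]big1 ?addr0.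
  by have := congr1 (fun M : 'M[algC]_d.+1 => M i i) H; rewrite !mxE eqxx => ->; rewrite scale1r.
move=> l nl; have := congr1 (fun M : 'M[algC]_d.+1 => M i l) H; rewrite !mxE eq_sym (negbTE nl) => ->.
by rewrite scale0r.
Qed.

Lemma AE_mul i t : adj R i *m E t = Pm i t *: E t.
Proof. by rewrite eigen Esum_mul. Qed.

Lemma EA_mul i t : E t *m adj R i = Pm i t *: E t.
Proof. by rewrite eigen mul_Esum. Qed.

Definition J : 'M[algC]_n := const_mx 1.

Lemma sum_adj : \sum_i adj R i = J.
Proof.
transitivity (\sum_i (fun _ => 1) i *: adj R i).
  by apply: eq_bigr => i _; rewrite scale1r.
by apply/matrixP => x y; rewrite sum_adjE mxE.
Qed.

Lemma some_pair : exists x y : 'I_n, True.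
Proof. by have [[x y] _] := wit_spec ord0; exists x, y. Qed.

Lemma n_nz : (n%:R : algC) != 0.
Proof.
have [x [_ _]] := some_pair; rewrite pnatr_eq0 -lt0n.
exact: (leq_ltn_trans (leq0n _) (ltn_ord x)).
Qed.

Lemma JJ : J *m J = n%:R *: J.
Proof.
apply/matrixP => x y; rewrite !mxE.
under eq_bigr do rewrite !mxE mulr1.
by rewrite sumr_const card_ord mulr1.
Qed.

Definition lam t := \sum_i Pm i t.

Lemma JE t : J *m E t = lam t *: E t.
Proof.
rewrite -sum_adj mulmx_suml scaler_suml; apply: eq_bigr => i _.
exact: AE_mul.
Qed.

Lemma J_decomp : J = \sum_t lam t *: E t.
Proof.
case: HE => _ _ _ H1 _.
by rewrite -[LHS]mulmx1 -H1 mulmx_sumr; apply: eq_bigr => t _; rewrite JE.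
Qed.

Lemma lam_val t : lam t = 0 \/ lam t = n%:R.
Proof.
have H : (lam t * lam t) *: E t = (n%:R * lam t) *: E t.
  by rewrite -scalerA -JE scalemxAr -JE mulmxA JJ -scalemxAl JE scalerA.
have /eqP := scale_E_inj H; rewrite -subr_eq0 -mulrBl mulf_eq0 subr_eq0.
by case/orP => /eqP ->; [right | left].
Qed.

Lemma E_sym j x y : E j x y = E j y x.
Proof.
case: HE => _ H _ _ _.
by have := congr1 (fun M : 'M[algC]_n => M y x) (H j); rewrite mxE.
Qed.

Lemma lam_n t : lam t = n%:R -> E t = n%:R^-1 *: J.
Proof.
move=> Hl; have [x0 [_ _]] := some_pair.
have HJ := JE t; rewrite Hl in HJ.
have Hcol x u : E t x u = E t x0 u.
  apply: (mulfI n_nz).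
  have := congr1 (fun M : 'M[algC]_n => M x u) HJ.
  have := congr1 (fun M : 'M[algC]_n => M x0 u) HJ.
  rewrite !mxE => <- <-; apply: eq_bigr => z _; by rewrite !mxE.
set a := E t x0 x0.
have Ha : E t = a *: J.
  apply/matrixP => x u; rewrite !mxE mulr1 Hcol E_sym Hcol.
  by rewrite /a.
have Hid : E t *m E t = E t by rewrite E_orth eqxx.
rewrite Ha -scalemxAl -scalemxAr JJ !scalerA in Hid.
have a_nz : a != 0.
  apply/negP => /eqP a0; move: (E_nz t); rewrite Ha a0 scale0r eqxx //.
have Hj : J != 0.
  apply/negP => /eqP J0; have := congr1 (fun M : 'M[algC]_n => M x0 x0) J0.
  by rewrite !mxE => /eqP; rewrite oner_eq0.
have Hx := congr1 (fun M : 'M[algC]_n => M x0 x0) Hid; rewrite /= !mxE !mulr1 in Hx.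
have H3 : a * n%:R = 1 by apply: (mulfI a_nz); rewrite mulr1 mulrA.
rewrite Ha; suff -> : a = n%:R^-1 by [].
by apply: (mulIf n_nz); rewrite H3 mulVf // n_nz.
Qed.

Lemma e0_spec : exists e0, [/\ E e0 = n%:R^-1 *: J, lam e0 = n%:R &
  forall t, t != e0 -> lam t = 0].
Proof.
have [x0 [_ _]] := some_pair.
case: (boolP [exists t, lam t != 0]) => [/existsP [e0 He0] | /existsPn Hall].
  have Hl : lam e0 = n%:R by case: (lam_val e0) => // H; rewrite H eqxx in He0.
  exists e0; split => //; first exact: lam_n.
  move=> t nt; case: (lam_val t) => // Ht.
  have := E_orth e0 t; rewrite eq_sym (negbTE nt) (lam_n Hl) (lam_n Ht).
  rewrite -scalemxAl -scalemxAr JJ !scalerA => /eqP.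
  rewrite scaler_eq0 => /orP [|/eqP J0].
    by rewrite !mulf_eq0 invr_eq0 (negbTE n_nz).
  have := congr1 (fun M : 'M[algC]_n => M x0 x0) J0.
  by rewrite !mxE => /eqP; rewrite oner_eq0.
have : J = 0.
  rewrite J_decomp big1 // => t _.
  by have := Hall t; rewrite negbK => /eqP ->; rewrite scale0r.
move/(congr1 (fun M : 'M[algC]_n => M x0 x0)); rewrite !mxE => /eqP.
by rewrite oner_eq0.
Qed.

Lemma sum_delta (f : 'I_d.+1 -> algC) c : \sum_r (r == c)%:R * f r = f c.
Proof.
rewrite (bigD1 c) //= eqxx mul1r big1 ?addr0 // => r /negbTE ->.
by rewrite mul0r.
Qed.

Lemma E_delta r : E r = \sum_t (r == t)%:R *: E t.
Proof.
rewrite (bigD1 r) //= eqxx scale1r big1 ?addr0 // => t.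
by rewrite eq_sym => /negbTE ->; rewrite scale0r.
Qed.


Lemma krein_formula i j : schur (E i) (E j) =
  \sum_k (\sum_a coef (E i) a * coef (E j) a * Pm a k) *: E k.
Proof.
rewrite (E_coef i) (E_coef j) schur_sum -!E_coef.
under eq_bigr do rewrite eigen scaler_sumr.
rewrite exchange_big /=; apply: eq_bigr => k _.
rewrite scaler_suml; apply: eq_bigr => a _; by rewrite scalerA.
Qed.

Lemma adj_id i0 : (forall x y, (R x y == i0) = (x == y)) -> adj R i0 = 1%:M.
Proof. by move=> H; apply/matrixP => x y; rewrite !mxE H. Qed.

Variables (e0 : 'I_d.+1).
Hypothesis He0 : E e0 = n%:R^-1 *: J.
Hypothesis Hlam : forall t, t != e0 -> lam t = 0.

Lemma colsum t u : \sum_x E t x u = (t == e0)%:R.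
Proof.
case: eqP => [-> | /eqP nt].
  have Jx : forall x, (n%:R^-1 *: J) x u = n%:R^-1 by move=> x; rewrite !mxE mulr1.
  rewrite He0; under eq_bigr do rewrite Jx.
  by rewrite sumr_const card_ord -(mulr_natr (n%:R^-1)) mulVf ?n_nz.
have [x0 [_ _]] := some_pair.
have H := congr1 (fun M : 'M[algC]_n => M x0 u) (JE t); rewrite Hlam // scale0r /= in H.
transitivity (0 : algC) => //.
rewrite !mxE in H; apply: (etrans _ H); apply: eq_bigr => x _; by rewrite /J mxE mul1r.
Qed.

Lemma K_row y k : Pm k e0 = (\sum_z (R y z == k : nat))%:R.
Proof.
have := congr1 (fun M : 'M[algC]_n => M y y) (AE_mul k e0).
rewrite He0 !mxE => H.
apply: (mulIf (invr_neq0 n_nz)); rewrite mulr1 in H; rewrite -H.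
rewrite natr_sum mulr_suml; apply: eq_bigr => z _; rewrite !mxE.
by case: (R y z == k); rewrite ?mul1r ?mul0r ?mulr1.
Qed.

Lemma K_nz k : Pm k e0 != 0.
Proof.
have [[x y] [_ Hxy]] := wit_spec k; rewrite (K_row x) pnatr_eq0 -lt0n.
by rewrite (bigD1 y) //= Hxy eqxx.
Qed.

Lemma sum_pnum i k : \sum_j (pnum j i k)%:R = Pm i e0.
Proof.
have H1 : J *m adj R i = \sum_l (\sum_j (pnum j i l)%:R) *: adj R l.
  rewrite -sum_adj mulmx_suml.
  under eq_bigr do rewrite adj_mul.
  rewrite exchange_big /=; apply: eq_bigr => l _; by rewrite scaler_suml.
have H2 : J *m adj R i = \sum_l (Pm i e0) *: adj R l.
  have -> : J = n%:R *: E e0 by rewrite He0 scalerA mulfV ?n_nz // scale1r.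
  rewrite -scalemxAl EA_mul -scaler_sumr sum_adj He0 !scalerA.
  by rewrite mulrC mulrA mulVf ?n_nz // mul1r.
rewrite H1 in H2; exact: (adj_indep H2).
Qed.

Lemma krein_e0 q : is_krein E q -> forall r t, q r e0 t = (r == t)%:R.
Proof.
move=> Hq r; apply: E_indep.
have H := Hq r e0.
have H' : schur (E r) (E e0) = n%:R^-1 *: E r.
  by apply/matrixP => x y; rewrite He0 !mxE mulr1 mulrC.
rewrite H' in H; rewrite -E_delta.
have := congr1 (fun M => n%:R *: M) H; rewrite !scalerA mulfV ?n_nz //.
by rewrite !scale1r => ->.
Qed.

Lemma ups_contract r s t y z :
  \sum_x Upsilon (E r) (E s) (E t) x y z = (r == e0)%:R * ((s == t)%:R * E s y z).
Proof.
rewrite /Upsilon exchange_big /=.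
transitivity ((r == e0)%:R * (E s *m E t) y z).
  rewrite mxE mulr_sumr; apply: eq_bigr => u _.
  rewrite -(colsum r u) mulr_suml; apply: eq_bigr => x _.
  by rewrite (E_sym t z u) mulrA.
by rewrite E_orth; case: (s =P t) => [-> | _]; rewrite ?mxE ?mul1r ?mul0r.
Qed.

Lemma contraction sigma : is_DeltaWye R E sigma ->
  forall i j k s, sigma i j k e0 s s = (pnum j i k)%:R * Pm k s.
Proof.
move=> [_ HD] i j k.
have HRs : forall x y, R x y = R y x by case: HR.
have M1 : (pnum j i k)%:R *: adj R k = \sum_s sigma i j k e0 s s *: E s.
  apply/matrixP => y z.
  have H := eq_bigr (P := fun _ => true) _ (fun x _ => HD i j k x y z).
  rewrite /= in H.
  have L : \sum_x Delta (adj R i) (adj R j) (adj R k) x y z =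
           ((pnum j i k)%:R *: adj R k) y z.
    transitivity ((adj R j *m adj R i) y z * adj R k y z).
      rewrite mxE mulr_suml; apply: eq_bigr => x _.
      by rewrite /Delta /adj !mxE (HRs x y) [X in X * _ = _]mulrC.
    rewrite adj_mul sum_adjE !mxE; case: eqP => [-> | _]; by rewrite ?mulr1 ?mulr0.
  rewrite -L H summxE.
  rewrite exchange_big /=.
  under eq_bigr => r _ do (rewrite exchange_big /=;
    under eq_bigr => s _ do (rewrite exchange_big /=;
      under eq_bigr => t _ do rewrite -mulr_sumr ups_contract)).
  rewrite (bigD1 e0) //= [X in _ + X]big1 ?addr0; last first.
    move=> r /negbTE nr; apply: big1 => s _; apply: big1 => t _.
    by rewrite nr mul0r mulr0.
  apply: eq_bigr => s _; rewrite (bigD1 s) //= [X in _ + X]big1 ?addr0; last first.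
    by move=> t; rewrite eq_sym => /negbTE ->; rewrite mul0r !mulr0.
  by rewrite !mxE !eqxx !mul1r.
move=> s.
have M2 : \sum_s ((pnum j i k)%:R * Pm k s) *: E s = \sum_s sigma i j k e0 s s *: E s.
  by rewrite -M1 eigen scaler_sumr; apply: eq_bigr => s0 _; rewrite scalerA.
by rewrite (E_indep M2 s).
Qed.

End Scheme.

Lemma natr_sqr_inj (a b : nat) : (a%:R * a%:R = b%:R * b%:R :> algC) -> a = b.
Proof.
rewrite -!natrM => /eqP; rewrite eqr_nat => H.
by apply/eqP; rewrite -eqn_sqr.
Qed.

Theorem mainTheorem4 (n m d : nat)
    (R : 'I_n -> 'I_n -> 'I_d.+1) (S : 'I_m -> 'I_m -> 'I_d.+1)
    (E : 'I_d.+1 -> 'M[algC]_n) (E' : 'I_d.+1 -> 'M[algC]_m) :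
  is_symm_scheme R -> is_symm_scheme S ->
  exactly_triply_regular R -> exactly_triply_regular S ->
  prim_idem_ordering R E -> prim_idem_ordering S E' ->
  (exists sigma, is_DeltaWye R E sigma /\ is_DeltaWye S E' sigma) ->
  [/\ exists p, is_intersection_numbers R p /\ is_intersection_numbers S p,
      exists P, is_eigenmatrix R E P /\ is_eigenmatrix S E' P,
      exists Q, is_dual_eigenmatrix R E Q /\ is_dual_eigenmatrix S E' Q,
      exists q, is_krein E q /\ is_krein E' q &
      exists kappa : 'M[algC]_n -> 'M[algC]_m,
        [/\ forall c : 'I_d.+1 -> algC,
              kappa (\sum_i c i *: adj R i) = \sum_i c i *: adj S i,
            forall M N, inBM R M -> inBM R N ->
              kappa (M *m N) = kappa M *m kappa N /\
              kappa (schur M N) = schur (kappa M) (kappa N) &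
            forall j, kappa (E j) = E' j]].
Proof.
move=> HR HS _ _ HE HE' [sigma [DX DY]].
have [e0 [He0 Hl0 Hl]] := e0_spec HR HE.
have [f0 [Hf0 Hm0 Hm]] := e0_spec HS HE'.
have CX := contraction HR HE He0 Hl DX.
have CY := contraction HS HE' Hf0 Hm DY.
have ef : e0 = f0.
  case: (e0 =P f0) => // nef; exfalso.
  case: DY => [[q' [Hq' Hv]] _].
  have Z : forall i j k, sigma i j k e0 f0 f0 = 0.
    move=> i j k; apply: Hv; rewrite (krein_e0 HS HE' Hf0 Hq').
    by case: eqP.
  have [[i0 Hi0] _ _ _] := HR.
  have P1 : Pm R E i0 f0 = 1.
    apply: (scale_E_inj HE (s := f0)).
    by rewrite -(EA_mul HR HE) (adj_id Hi0) mulmx1 scale1r.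
  have := K_nz HR HE He0 i0; rewrite -(sum_pnum HR HE He0 i0 i0).
  rewrite big1 ?eqxx // => j _.
  by have := CX i0 j i0 f0; rewrite P1 mulr1 Z => <-.
subst f0.
set PX := Pm R E; set PY := Pm S E'.
have Heq : forall i j k s, (pnum R j i k)%:R * PX k s = (pnum S j i k)%:R * PY k s.
  by move=> i j k s; rewrite -CX -CY.
have HK : forall i k s, PX i e0 * PX k s = PY i e0 * PY k s.
  move=> i k s; rewrite /PX /PY -(sum_pnum HR HE He0 i k) -(sum_pnum HS HE' Hf0 i k) !mulr_suml.
  by apply: eq_bigr => j _; apply: Heq.
have [[x _] _] := wit_spec HR ord0.
have [[x' _] _] := wit_spec HS ord0.
have KK : forall k, PX k e0 = PY k e0.
  move=> k; have := HK k k e0.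
  rewrite /PX /PY (K_row HR HE He0 x k) (K_row HS HE' Hf0 x' k).
  by move/natr_sqr_inj => ->.
have PP : forall k s, PX k s = PY k s.
  move=> k s; have := HK k k s; rewrite KK => H.
  exact: (mulfI (K_nz HS HE' Hf0 k) H).
have pp : forall i j k, pnum R i j k = pnum S i j k.
  move=> i j k; have := Heq j i k e0; rewrite PP => H.
  by apply/eqP; rewrite -(eqr_nat algC); apply/eqP; apply: (mulIf (K_nz HS HE' Hf0 k) H).
have nm : (n%:R : algC) = m%:R.
  rewrite -Hl0 -Hm0 /lam; apply: eq_bigr => i _; exact: PP.
have CC : forall j l, coef R (E j) l = coef S (E' j) l.
  have PM : PX = PY by apply/matrixP => i j; apply: PP.
  move=> j l.
  have : Cmat R E = Cmat S E'.
    by rewrite -(invmxK (Cmat R E)) -(invmxK (Cmat S E')) -/(Pm R E) -/(Pm S E') -/PX -/PY PM.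
  by move/(congr1 (fun M : 'M[algC]_d.+1 => M j l)); rewrite !mxE.
have nnz := n_nz HR.
have mnz := n_nz HS.
split.
- exists (pnum R); split => i j k x0 y0 Hk; [rewrite (pnumE HR x0 y0 i j) Hk // | ].
  by rewrite (pnumE HS) Hk pp.
- exists (fun j i => PX i j); split => i; first exact: (eigen HR HE).
  rewrite (eigen HS HE'); apply: eq_bigr => s _; by rewrite PP.
- exists (fun j i => n%:R * coef R (E i) j); split => i.
    rewrite {1}(E_coef HR HE i) scaler_sumr; apply: eq_bigr => j _.
    by rewrite scalerA mulrA mulVf // mul1r.
  rewrite {1}(E_coef HS HE' i) scaler_sumr; apply: eq_bigr => j _.
  by rewrite scalerA nm mulrA mulVf // mul1r CC.
- exists (fun i j k => n%:R * \sum_a coef R (E i) a * coef R (E j) a * PX a k).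
  split => i j.
    rewrite (krein_formula HR HE) scaler_sumr; apply: eq_bigr => k _.
    by rewrite scalerA mulrA mulVf // mul1r.
  rewrite (krein_formula HS HE') scaler_sumr; apply: eq_bigr => k _.
  rewrite scalerA nm mulrA mulVf // mul1r; congr (_ *: _).
  by apply: eq_bigr => a _; rewrite !CC PP.
- set kappa := fun M => \sum_i coef R M i *: adj S i.
  have kap : forall c, kappa (\sum_i c i *: adj R i) = \sum_i c i *: adj S i.
    by move=> c; rewrite /kappa; apply: eq_bigr => i _; rewrite (coef_sum HR).
  exists kappa; split => //.
  + move=> M N HM HN.
    rewrite (inBM_coef HR HM) (inBM_coef HR HN).
    set a := coef R M; set b := coef R N.
    rewrite (mul_sum HR) schur_sum !kap (mul_sum HS) schur_sum; split => //.
    apply: eq_bigr => k _; congr (_ *: _); apply: eq_bigr => i _.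
    by apply: eq_bigr => j _; rewrite pp.
  + move=> j; rewrite /kappa (E_coef HS HE' j); apply: eq_bigr => i _; by rewrite CC.
Qed.
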